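(* In the $\ell^2$ linear social choice setting, on every instance with $n$ voters the uniform projection rule $f_{\mathrm{UProj2}}$ satisfies $\mathbb{E}_{c\sim f_{\mathrm{UProj2}}}[\mathrm{UW}(c)]\ge\frac nd$. Consequently $\mathrm{D}(f_{\mathrm{UProj2}})=O(d)$.
   Context: Setting ($\ell^2$ linear social choice). Fix a dimension $d$. An instance consists of $n$ voters and $m$ candidates, each a vector in $\mathbb{R}^d_{\ge 0}$ with Euclidean norm $1$ (superscripts denote coordinates), with every voter vector in $\mathrm{Cone}(C)$ (nonnegative linear combinations of the candidate vectors $C$). Utility $u_v(c)=v^\top c$; voters report consistent rankings; $\mathrm{UW}(c)=\sum_v u_v(c)$. A randomized rule may use the profile and candidate vectors but not the voter vectors. Distortion on an instance: $\max_c\mathrm{UW}(c)/\mathbb{E}_{c\sim f}[\mathrm{UW}(c)]$; $\mathrm{D}(f)$ is the supremum over instances, as a function of $d$. Uniform projection rule $f_{\mathrm{UProj2}}$: with $\mu_2=(1/\sqrt d,\dots,1/\sqrt d)$, output a distribution $(p_c)_{c\in C}$ such that $\hat c=\sum_c p_c c$ minimizes $\mathrm{KL}(\mu_2\|x)=\sum_{i=1}^d\mu_2^i\ln(\mu_2^i/x^i)$ over $x\in\mathrm{CH}(C)$, the convex hull of $C$. *)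

(* Defs.v *)
From mathcomp Require Import all_boot all_order all_algebra.
From mathcomp Require Import all_classical all_reals all_analysis.
Set Implicit Arguments. Unset Strict Implicit. Unset Printing Implicit Defensive.
Import Order.TTheory GRing.Theory Num.Theory.
Local Open Scope ring_scope.

Section Defs.
Variable R : realType.

Definition vecR (d : nat) := 'I_d -> R.

Definition unit_nonneg (d : nat) (x : vecR d) : Prop :=
  (forall i, 0 <= x i) /\ \sum_(i < d) x i ^+ 2 = 1.

Definition dotR (d : nat) (x y : vecR d) : R := \sum_(i < d) x i * y i.

Definition lincomb (d m : nat) (C : 'I_m -> vecR d) (a : 'I_m -> R) : vecR d :=
  fun i => \sum_(c < m) a c * C c i.

Definition is_distr (m : nat) (p : 'I_m -> R) : Prop :=
  (forall c, 0 <= p c) /\ \sum_(c < m) p c = 1.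

Definition in_cone (d m : nat) (C : 'I_m -> vecR d) (v : vecR d) : Prop :=
  exists a : 'I_m -> R, (forall c, 0 <= a c) /\ v = lincomb C a.

Definition in_hull (d m : nat) (C : 'I_m -> vecR d) (x : vecR d) : Prop :=
  exists q : 'I_m -> R, is_distr q /\ x = lincomb C q.

Definition instance (d n m : nat) (V : 'I_n -> vecR d) (C : 'I_m -> vecR d) : Prop :=
  (forall c, unit_nonneg (C c)) /\
  (forall v, unit_nonneg (V v)) /\
  (forall v, in_cone C (V v)).

Definition UW (d n m : nat) (V : 'I_n -> vecR d) (C : 'I_m -> vecR d) (c : 'I_m) : R :=
  \sum_(v < n) dotR (V v) (C c).

Definition EUW (d n m : nat) (V : 'I_n -> vecR d) (C : 'I_m -> vecR d) (p : 'I_m -> R) : R :=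
  \sum_(c < m) p c * UW V C c.

Definition distortion (d n m : nat) (V : 'I_n -> vecR d) (C : 'I_m -> vecR d)
  (p : 'I_m -> R) : R :=
  (\big[Num.max/0]_(c < m) UW V C c) / EUW V C p.

Definition mu2 (d : nat) : vecR d := fun _ => (Num.sqrt (d%:R))^-1.
Arguments mu2 d : clear implicits.

(* KL(mu || x) = sum_i mu^i ln(mu^i / x^i); its domain is x with all x^i > 0
   (outside it the divergence is +oo). *)
Definition KL (d : nat) (mu x : vecR d) : R :=
  \sum_(i < d) mu i * ln (mu i / x i).

Definition pos_vec (d : nat) (x : vecR d) : Prop := forall i, 0 < x i.

(* p is an output of the uniform projection rule f_UProj2: p is a distribution
   whose mean c_hat minimizes KL(mu2 || x) over x in CH(C) (over the domain of
   KL, i.e. c_hat has positive coordinates, compared with all x in CH(C) having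
   positive coordinates; points with a zero coordinate have KL = +oo). *)
Definition UProj2_output (d m : nat) (C : 'I_m -> vecR d) (p : 'I_m -> R) : Prop :=
  is_distr p /\
  pos_vec (lincomb C p) /\
  (forall x, in_hull C x -> pos_vec x -> KL (mu2 d) (lincomb C p) <= KL (mu2 d) x).

End Defs.

(* Main.v *)
Set Warnings "-all".
Require Import Defs.
From mathcomp Require Import all_boot all_order all_algebra.
From mathcomp Require Import all_classical all_reals all_analysis.
From mathcomp Require Import ring lra.
Import Order.TTheory GRing.Theory Num.Theory.
Local Open Scope ring_scope.

Lemma ln_le_sub1 (R : realType) (y : R) : 0 < y -> ln y <= y - 1.
Proof.
move=> y0; have := @le_ln1Dx R (y - 1).
have -> : 1 + (y - 1) = y by ring.
apply; lra.
Qed.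

Lemma ln_cmp (R : realType) (a b c : R) : 0 < a -> 0 < b -> 0 < c ->
  ln (a / b) <= ln (a / c) + (c / b - 1).
Proof.
move=> a0 b0 c0.
rewrite !ln_div ?posrE //.
have := @ln_le_sub1 R (c / b) (divr_gt0 c0 b0); rewrite ln_div ?posrE //. lra.
Qed.

Lemma final_step {R : realType} {S Q : R} : 0 <= Q ->
  (forall t, 0 < t -> t <= 1/2 -> S - 2*t*Q <= 0) -> S <= 0.
Proof.
move=> Q0 H; rewrite leNgt; apply/negP => S0.
have D0 : 0 < 2*S + 4*Q + 1 by lra.
have := H (S / (2*S + 4*Q + 1)).
rewrite divr_gt0 // => /(_ isT).
rewrite ler_pdivrMr //.
have h2 : S <= 1 / 2 * (2 * S + 4 * Q + 1).
  have -> : 1 / 2 * (2 * S + 4 * Q + 1) = S + (2 * Q + 1 / 2) by field.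
  rewrite lerDl; apply: addr_ge0; [lra| by rewrite divr_ge0].
move=> /(_ h2).
have -> : S - 2 * (S / (2 * S + 4 * Q + 1)) * Q = S * (2*S + 2*Q + 1) / (2 * S + 4 * Q + 1).
  by field; rewrite gt_eqF.
move=> h.
have : 0 < S * (2*S + 2*Q + 1) / (2 * S + 4 * Q + 1).
  by rewrite divr_gt0 // mulr_gt0 //; lra.
lra.
Qed.
Lemma alg (R : realType) (x c t : R) : 0<x -> 0<=c -> 0<t -> t<=1/2 ->
  x / ((1-t)*x + t*c) - 1 <= - t * ((c-x)/x - 2*t*((c-x)/x)^+2).
Proof.
move=> x0 c0 t0 t1.
set u := (c-x)/x.
have cE : c = x*(1+u) by rewrite /u; field; rewrite gt_eqF.
have hu : -1 <= u.
  rewrite /u mulrBl divff ?gt_eqF //. have : 0 <= c / x by rewrite divr_ge0 // ltW. lra.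
have yE : (1-t)*x + t*c = x*(1+t*u) by rewrite cE; ring.
have p : 0 < 1 + t*u by nra.
rewrite yE invfM mulrA divff ?gt_eqF // mul1r.
rewrite lerBlDr -subr_ge0.
have -> : - t * (u - 2 * t * u ^+ 2) + 1 - (1 + t * u)^-1 =
   (t^+2 * u^+2 * (1 + 2*t*u)) / (1 + t*u) by field; rewrite gt_eqF.
apply: divr_ge0; last exact: ltW.
apply: mulr_ge0; first by rewrite -exprMn sqr_ge0.
nra.
Qed.

Lemma foc (R : realType) d m (C : 'I_m -> vecR R d) (p : 'I_m -> R) (c : 'I_m) :
  (0 < d)%N -> unit_nonneg (C c) -> UProj2_output C p ->
  \sum_(i < d) C c i / lincomb C p i <= d%:R.
Proof.
move=> d0 [c0 _] [[p0 p1] [xpos opt]].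
set x := lincomb C p.
pose u i := (C c i - x i) / x i.
have key : forall t, 0 < t -> t <= 1/2 ->
    \sum_(i < d) u i - 2 * t * \sum_(i < d) u i ^+ 2 <= 0.
  move=> t t0 t1.
  pose q := fun k => (1 - t) * p k + (if k == c then t else 0).
  have qd : is_distr q.
    split.
      move=> k; rewrite /q; apply: addr_ge0.
        by apply: mulr_ge0 => //; lra.
      by case: eqP => _ //; exact: ltW.
    rewrite /q big_split /= -mulr_sumr p1 mulr1.
    rewrite (bigD1 c) //= eqxx big1 ?addr0; first by ring.
    by move=> k /negbTE ->.
  set y := lincomb C q.
  have yE : forall i, y i = (1 - t) * x i + t * C c i.
    move=> i; rewrite /y /x /lincomb /q.
    under eq_bigr do rewrite mulrDl -mulrA.
    rewrite big_split /= -mulr_sumr; congr (_ + _).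
    rewrite (bigD1 c) //= eqxx big1 ?addr0 //.
    by move=> k /negbTE ->; rewrite mul0r.
  have ypos : forall i, 0 < y i.
    move=> i; rewrite yE.
    have h1t : 0 < 1 - t by lra.
    have := mulr_gt0 h1t (xpos i); have := mulr_ge0 (ltW t0) (c0 i); rewrite -/x; lra.
  have := opt y (ex_intro _ q (conj qd erefl)) ypos.
  rewrite /KL.
  pose mu0v : R := (Num.sqrt (d%:R))^-1.
  have mu0 : 0 < mu0v by rewrite /mu0v invr_gt0 sqrtr_gt0 ltr0n.
  have hle : \sum_(i < d) @mu2 R d i * ln (@mu2 R d i / y i) <=
     \sum_(i < d) @mu2 R d i * ln (@mu2 R d i / x i) +
     mu0v * \sum_(i < d) (x i / y i - 1).
    rewrite mulr_sumr -big_split /=; apply: ler_sum => i _.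
    rewrite /mu2 -mulrDr; apply: ler_wpM2l; first exact: ltW.
    by apply: ln_cmp; [exact: mu0 | exact: ypos | exact: xpos].
  move=> hopt.
  have h0 : 0 <= \sum_(i < d) (x i / y i - 1).
    have : 0 <= mu0v * \sum_(i < d) (x i / y i - 1) by lra.
    by rewrite pmulr_rge0.
  have h1 : \sum_(i < d) (x i / y i - 1) <=
      - t * (\sum_(i < d) u i - 2 * t * \sum_(i < d) u i ^+ 2).
    have -> : - t * (\sum_(i < d) u i - 2 * t * \sum_(i < d) u i ^+ 2) =
        \sum_(i < d) (- t * (u i - 2 * t * u i ^+ 2)).
      by rewrite -mulr_sumr sumrB -mulr_sumr.
    apply: ler_sum => i _; rewrite yE /u.
    apply: alg; [exact: xpos | exact: c0 | exact: t0 | exact: t1].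
  have : 0 <= - t * (\sum_(i < d) u i - 2 * t * \sum_(i < d) u i ^+ 2) by lra.
  rewrite mulNr oppr_ge0 pmulr_rle0 //.
have hQ : 0 <= \sum_(i < d) u i ^+ 2 by apply: sumr_ge0 => i _; exact: sqr_ge0.
have := final_step hQ key.
rewrite /u.
under eq_bigr do rewrite mulrBl divff ?gt_eqF ?xpos //.
rewrite sumrB sumr_const card_ord. lra.
Qed.

Lemma coord_le1 {R : realType} {d} {x : vecR R d} {i} : unit_nonneg x -> x i <= 1.
Proof.
move=> [x0 x1].
have h : x i ^+ 2 <= 1.
  rewrite -x1 (bigD1 i) //= lerDl; apply: sumr_ge0 => j _; exact: sqr_ge0.
have := x0 i; nra.
Qed.

Lemma sum_ge1 {R : realType} {d} {x : vecR R d} : unit_nonneg x -> 1 <= \sum_(i < d) x i.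
Proof.
move=> ux; have [x0 x1] := ux.
rewrite -x1; apply: ler_sum => i _.
have := coord_le1 (i:=i) ux; have := x0 i; nra.
Qed.

Lemma amgm {R : realType} (D x c : R) : 0 < D -> 0 < x -> 0 <= c ->
  2 * c <= D * (c * x) + c / x / D.
Proof.
move=> D0 x0 c0; rewrite -subr_ge0.
have -> : D * (c * x) + c / x / D - 2 * c = c * (D * x - 1) ^+ 2 / (x * D).
  by field; rewrite ?gt_eqF.
apply: divr_ge0; [apply: mulr_ge0 => //; exact: sqr_ge0 | apply: ltW; exact: mulr_gt0].
Qed.

Lemma cand_bound {R : realType} d m (C : 'I_m -> vecR R d) (p : 'I_m -> R) (c : 'I_m) :
  (0 < d)%N -> unit_nonneg (C c) -> UProj2_output C p ->
  (\sum_(i < d) C c i) / d%:R <= dotR (C c) (lincomb C p).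
Proof.
move=> d0 uc up.
have A := @foc R _ _ _ _ _ d0 uc up.
have s1 := sum_ge1 uc.
have [c0 _] := uc.
have [_ [xpos _]] := up.
have D0 : 0 < (d%:R : R) by rewrite ltr0n.
have h : 2 * \sum_(i < d) C c i <=
   d%:R * dotR (C c) (lincomb C p) + (\sum_(i < d) C c i / lincomb C p i) / d%:R.
  rewrite /dotR mulr_sumr mulr_sumr mulr_suml -big_split /=.
  apply: ler_sum => i _; exact: amgm.
have h2 : (\sum_(i < d) C c i / lincomb C p i) / d%:R <= 1.
  by rewrite ler_pdivrMr // mul1r.
rewrite ler_pdivrMr //.
lra.
Qed.

Lemma voter_bound {R : realType} d n m (V : 'I_n -> vecR R d) (C : 'I_m -> vecR R d)
  (p : 'I_m -> R) (v : 'I_n) :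
  (0 < d)%N -> instance V C -> UProj2_output C p ->
  1 / d%:R <= dotR (V v) (lincomb C p).
Proof.
move=> d0 [uC [uV cV]] up.
have D0 : 0 < (d%:R : R) by rewrite ltr0n.
have [a [a0 vE]] := cV v.
have s1 := sum_ge1 (uV v).
have e1 : dotR (V v) (lincomb C p) = \sum_(c < m) a c * dotR (C c) (lincomb C p).
  rewrite /dotR vE /lincomb.
  under eq_bigr do rewrite mulr_suml.
  rewrite exchange_big /=; apply: eq_bigr => c _.
  rewrite mulr_sumr; apply: eq_bigr => i _; by rewrite mulrA.
have e2 : \sum_(i < d) V v i = \sum_(c < m) a c * \sum_(i < d) C c i.
  rewrite vE /lincomb exchange_big /=; apply: eq_bigr => c _.
  by rewrite mulr_sumr.
rewrite e1.
have h : \sum_(c < m) a c * ((\sum_(i < d) C c i) / d%:R) <=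
    \sum_(c < m) a c * dotR (C c) (lincomb C p).
  apply: ler_sum => c _; apply: ler_wpM2l; first exact: a0.
  exact: (@cand_bound R _ _ _ _ c d0 (uC c) up).
apply: le_trans h.
under eq_bigr do rewrite mulrA.
rewrite -mulr_suml -e2 ler_pdivrMr // divfK ?gt_eqF //.
Qed.

Lemma dot_le1 {R : realType} {d} {x y : vecR R d} : unit_nonneg x -> unit_nonneg y ->
  dotR x y <= 1.
Proof.
move=> [_ x1] [_ y1].
have : dotR x y <= (\sum_(i < d) x i ^+ 2 + \sum_(i < d) y i ^+ 2) / 2.
  rewrite -big_split mulr_suml; apply: ler_sum => i _.
  rewrite ler_pdivlMr //; have h : forall a b : R, a * b * 2 <= a ^+ 2 + b ^+ 2 by move=> a b; have := sqr_ge0 (a - b); nra.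
  exact: h.
rewrite x1 y1; lra.
Qed.

Lemma EUW_eq {R : realType} d n m (V : 'I_n -> vecR R d) (C : 'I_m -> vecR R d)
  (p : 'I_m -> R) : EUW V C p = \sum_(v < n) dotR (V v) (lincomb C p).
Proof.
rewrite /EUW /UW /dotR /lincomb.
under eq_bigr do rewrite mulr_sumr.
rewrite exchange_big /=; apply: eq_bigr => v _.
under eq_bigr do rewrite mulr_sumr.
rewrite exchange_big /=; apply: eq_bigr => i _.
rewrite mulr_sumr; apply: eq_bigr => c _; ring.
Qed.

Lemma part1 (R : realType) (d n m : nat) (V : 'I_n -> vecR R d) (C : 'I_m -> vecR R d)
          (p : 'I_m -> R) :
      instance V C -> UProj2_output C p ->
      EUW V C p >= n%:R / d%:R.
Proof.
move=> I up.
have [uC [uV cV]] := I.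
case: d V C I up uC uV cV => [|d] V C I up uC uV cV.
  rewrite invr0 mulr0 /EUW; apply: sumr_ge0 => c _.
  apply: mulr_ge0; first by have [[p0 _] _] := up.
  apply: sumr_ge0 => v _; apply: sumr_ge0 => i _; apply: mulr_ge0.
    by have [h _] := uV v.
  by have [h _] := uC c.
rewrite EUW_eq.
have -> : n%:R / d.+1%:R = \sum_(v < n) (1 / d.+1%:R : R).
  by rewrite sumr_const card_ord -(mulr_natl (1 / d.+1%:R : R) n) mul1r.
apply: ler_sum => v _; exact: voter_bound.
Qed.

Theorem theorem16 (R : realType) :
  (forall (d n m : nat) (V : 'I_n -> vecR R d) (C : 'I_m -> vecR R d)
          (p : 'I_m -> R),
      instance V C -> UProj2_output C p ->
      EUW V C p >= n%:R / d%:R)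
  /\
  (exists K : R, 0 < K /\
     forall (d n m : nat) (V : 'I_n -> vecR R d) (C : 'I_m -> vecR R d)
            (p : 'I_m -> R),
       (1 <= d)%N -> instance V C -> UProj2_output C p ->
       distortion V C p <= K * d%:R).
Proof.
split; first exact: part1.
exists 1; split => // d n m V C p d1 I up.
have E := @part1 R _ _ _ _ _ _ I up.
have [uC [uV _]] := I.
have D0 : 0 < (d%:R : R) by rewrite ltr0n.
have n0 : 0 <= (n%:R : R) by [].
have Mn : \big[Num.max/0]_(c < m) UW V C c <= n%:R.
  apply: bigmax_le => // c _.
  rewrite /UW; have -> : (n%:R : R) = \sum_(v < n) 1.
    by rewrite sumr_const card_ord.
  apply: ler_sum => v _; exact: dot_le1.
rewrite mul1r /distortion.
have : 0 <= n%:R / d%:R :> R by rewrite divr_ge0 // ltW.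
have [->|Epos] := eqVneq (EUW V C p) 0.
  by move=> _; rewrite invr0 mulr0; apply: ltW.
move=> nd0.
have Ep : 0 < EUW V C p by rewrite lt_def Epos /=; exact: le_trans E.
rewrite ler_pdivrMr //.
apply: (le_trans Mn).
have : d%:R * (n%:R / d%:R) <= d%:R * EUW V C p by rewrite ler_wpM2l // ltW.
rewrite mulrCA divff ?gt_eqF // mulr1 mulrC //.
Qed.
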